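(* The kernel of the augmentation homomorphism $\varepsilon:\Lambda(\mathbb{Q}\mathrm{Par})=\Lambda_0(\mathbb{Q}\mathrm{Par})\to L_0$ is an abelian Lie algebra.
   Context: The nonsymmetric operad of partitions $\mathrm{Par}$: $\mathrm{Par}((0))=\emptyset$, $\mathrm{Par}((1))=\{1\}$, and for $m\ge2$, $\mathrm{Par}((m))$ is the set of monomials $\prod_{i=1}^Nx_i^{a_i}$ with $N\ge2$, all $a_i\ge1$, $\sum a_i=m$. Partial composition: if $a_1+\dots+a_{l-1}+1\le s\le a_1+\dots+a_l$, then $\left(\prod_{i=1}^Nx_i^{a_i}\right)\circ_s\left(\prod_{k=1}^{N_s}x_k^{b_k}\right)=x_l^{a_l-1+\sum_kb_k}\prod_{i\ne l}x_i^{a_i}$; $1$ is a two-sided unit. $\Lambda(\mathbb{Q}\mathrm{Par})=\Lambda_0(\mathbb{Q}\mathrm{Par})=\bigoplus_{m\ge1}\mathbb{Q}\mathrm{Par}((m))$ with Lie bracket $[c,d]=\sum_{t=1}^{j}d\circ_tc-\sum_{s=1}^{k}c\circ_sd$ for $c\in\mathrm{Par}((k))$, $d\in\mathrm{Par}((j))$. $L_0=x\mathbb{Q}[x]\frac{d}{dx}$ with the usual bracket of vector fields; the augmentation $\varepsilon$ is the Lie algebra homomorphism sending every element of $\mathrm{Par}((m))$ to $x^m\frac{d}{dx}$ (so $\sum a_cc\mapsto(\sum a_c)x^m\frac{d}{dx}$). *)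

(* Defs.v *)
From mathcomp Require Import all_boot all_order all_algebra.
Set Implicit Arguments. Unset Strict Implicit. Unset Printing Implicit Defensive.
Import GRing.Theory.
Local Open Scope ring_scope.

(* A basis element of Par is encoded by its exponent sequence [:: a_1; ...; a_N]
   (the monomial prod_i x_i^{a_i}); the unit 1 of Par((1)) is encoded by [:: 1%N].
   Its arity m is sumn a. *)
Definition isPar (a : seq nat) : bool :=
  all (fun x => 0 < x)%N a && ((1 < size a)%N || (a == [:: 1%N])).

Definition arity (a : seq nat) : nat := sumn a.

(* replace the exponent a_l (where a_1+..+a_{l-1} < s <= a_1+..+a_l) by a_l - 1 + B *)
Fixpoint ins (a : seq nat) (s B : nat) : seq nat :=
  match a with
  | [::] => [::]
  | x :: a' => if (s <= x)%N then (x.-1 + B)%N :: a' else x :: ins a' (s - x) B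
  end.

(* partial composition c o_s d (s is 1-based); 1 is a two-sided unit *)
Definition parcomp (c : seq nat) (s : nat) (d : seq nat) : seq nat :=
  if c == [:: 1%N] then d else ins c s (sumn d).

(* Elements of Lambda(Q Par): finite formal Q-linear combinations of basis elements,
   identified up to equality of their coefficient functions. *)
Definition vec := seq (rat * seq nat).

Definition coef (v : vec) (p : seq nat) : rat := \sum_(x <- v | x.2 == p) x.1.

Definition br (c d : seq nat) : vec :=
  [seq (1, parcomp d t c) | t <- iota 1 (arity d)] ++
  [seq (-1, parcomp c s d) | s <- iota 1 (arity c)].

Definition bracket (v w : vec) : vec :=
  flatten [seq [seq (x.1 * y.1 * z.1, z.2) | z <- br x.2 y.2] | x <- v, y <- w].

Definition valid (v : vec) : bool := all (fun x => isPar x.2) v.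

(* augmentation: eps(v) = sum_m (sum of coefficients of arity-m elements) x^m d/dx;
   v is in the kernel iff every such sum vanishes. *)
Definition in_ker_eps (v : vec) : Prop :=
  forall m : nat, \sum_(x <- v | arity x.2 == m) x.1 = 0.

(* Main.v *)
Require Import Defs.
From mathcomp Require Import all_boot all_order all_algebra.
Import GRing.Theory.
Local Open Scope ring_scope.

Lemma coef_cat s t p : coef (s ++ t) p = coef s p + coef t p.
Proof. by rewrite /coef big_cat. Qed.

Lemma coef_scale (a : rat) (s : vec) p :
  coef [seq (a * z.1, z.2) | z <- s] p = a * coef s p.
Proof. by rewrite /coef big_map /= big_distrr. Qed.

Definition A p (c d : seq nat) : rat :=
  \sum_(t <- iota 1 (arity d)) (parcomp d t c == p)%:R.
Definition B p (c d : seq nat) : rat :=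
  \sum_(s <- iota 1 (arity c)) (parcomp c s d == p)%:R.

Lemma coef_br c d p : coef (br c d) p = A p c d - B p c d.
Proof.
rewrite /br coef_cat /coef !big_map /A /B /= !(big_mkcond (fun _ => _ == p)) /=.
rewrite (big_morph (fun x : rat => - x) (@opprD _) (@oppr0 _)) //.
by congr (_ + _); apply: eq_bigr => i _; case: eqP.
Qed.

Lemma coef_bracket v w p : coef (bracket v w) p =
  \sum_(x <- v) \sum_(y <- w) x.1 * y.1 * (A p x.2 y.2 - B p x.2 y.2).
Proof.
elim: v => [|x v IH]; first by rewrite /coef /bracket /= !big_nil.
rewrite /bracket /= flatten_cat coef_cat -/(bracket v w) IH big_cons; congr (_ + _).
clear IH.
elim: w => [|y w IHw]; first by rewrite /coef !big_nil.
by rewrite /= coef_cat IHw big_cons coef_scale coef_br.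
Qed.

Lemma ker_sum (v : vec) (G : nat -> rat) : in_ker_eps v ->
  \sum_(x <- v) x.1 * G (arity x.2) = 0.
Proof.
move=> hv.
set N := (\sum_(x <- v) arity x.2).+1%N.
have -> : \sum_(x <- v) x.1 * G (arity x.2) =
   \sum_(x <- v) \sum_(m < N) (if arity x.2 == m then x.1 * G m else 0).
  apply: eq_big_seq => x xv.
  have hx : (arity x.2 < N)%N.
    rewrite ltnS; rewrite (big_rem x xv) /=; exact: leq_addr.
  rewrite (bigD1 (Ordinal hx)) //= eqxx big1 ?addr0 // => j /negPf hj.
  case: eqP => // e; move: hj; rewrite -(inj_eq val_inj) /= -e eqxx //.
rewrite exchange_big /= big1 // => m _.
by rewrite -big_mkcond /= -big_distrl /= hv mul0r.
Qed.

Lemma arity1 c : isPar c -> (arity c == 1%N) = (c == [:: 1%N]).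
Proof.
case: c => [|a [|b c]] //=; rewrite /isPar /arity /=.
- by case: a => [|[|a]] //= /andP[].
- case/andP=> /and3P[ha hb _] _.
  apply/idP/idP => // /eqP; case: a ha => [|[|a]] //=; case: b hb => [|b] //.
Qed.

Lemma sumA v d p : in_ker_eps v -> d != [:: 1%N] ->
  \sum_(x <- v) x.1 * A p x.2 d = 0.
Proof.
move=> hv hd.
rewrite -[RHS](@ker_sum _ (fun m => \sum_(t <- iota 1 (arity d)) (ins d t m == p)%:R) hv).
by apply: eq_bigr => x _; rewrite /A /parcomp (negPf hd).
Qed.

Lemma sumB w c p : in_ker_eps w -> c != [:: 1%N] ->
  \sum_(y <- w) y.1 * B p c y.2 = 0.
Proof.
move=> hv hd.
rewrite -[RHS](@ker_sum _ (fun m => \sum_(t <- iota 1 (arity c)) (ins c t m == p)%:R) hv).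
by apply: eq_bigr => x _; rewrite /B /parcomp (negPf hd).
Qed.

Lemma coef1 v : valid v -> in_ker_eps v -> coef v [:: 1%N] = 0.
Proof.
move=> hv hk; rewrite /coef -[RHS](hk 1%N) big_mkcond [RHS]big_mkcond /=.
apply: eq_big_seq => x xv; rewrite arity1 //; exact: (allP hv).
Qed.

Lemma A1 p c : A p c [:: 1%N] = (c == p)%:R.
Proof. by rewrite /A /= big_cons big_nil addr0. Qed.
Lemma B1 p d : B p [:: 1%N] d = (d == p)%:R.
Proof. by rewrite /B /= big_cons big_nil addr0. Qed.

Lemma coefE v p : coef v p = \sum_(x <- v) x.1 * (x.2 == p)%:R.
Proof. by rewrite /coef big_mkcond; apply: eq_bigr => x _; case: eqP; rewrite ?mulr1 ?mulr0. Qed.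

Theorem corollary4p2 (v w : vec) :
  valid v -> valid w -> in_ker_eps v -> in_ker_eps w ->
  forall p : seq nat, coef (bracket v w) p = 0.
Proof.
move=> vv vw kv kw p; rewrite coef_bracket.
under eq_bigr do under eq_bigr do rewrite mulrBr.
under eq_bigr do rewrite sumrB.
rewrite sumrB.
have -> : \sum_(x <- v) \sum_(y <- w) x.1 * y.1 * A p x.2 y.2 = 0.
  rewrite exchange_big /=.
  transitivity (\sum_(y <- w) (if y.2 == [:: 1%N] then y.1 else 0) * coef v p).
    apply: eq_bigr => y _.
    have -> : \sum_(x <- v) x.1 * y.1 * A p x.2 y.2 = y.1 * \sum_(x <- v) x.1 * A p x.2 y.2.
      by rewrite big_distrr; apply: eq_bigr => x _; rewrite (mulrC x.1) -mulrA.
    case: eqP => [->|/eqP hy]; last by rewrite sumA // mulr0 mul0r.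
    by rewrite coefE; congr (_ * _); apply: eq_bigr => x _; rewrite A1.
  by rewrite -big_distrl /= -big_mkcond -/(coef w [:: 1%N]) coef1 // mul0r.
have -> : \sum_(x <- v) \sum_(y <- w) x.1 * y.1 * B p x.2 y.2 = 0.
  transitivity (\sum_(x <- v) (if x.2 == [:: 1%N] then x.1 else 0) * coef w p).
    apply: eq_bigr => x _.
    have -> : \sum_(y <- w) x.1 * y.1 * B p x.2 y.2 = x.1 * \sum_(y <- w) y.1 * B p x.2 y.2.
      by rewrite big_distrr; apply: eq_bigr => y _; rewrite -mulrA.
    case: eqP => [->|/eqP hx]; last by rewrite sumB // mulr0 mul0r.
    by rewrite coefE; congr (_ * _); apply: eq_bigr => y _; rewrite B1.
  by rewrite -big_distrl /= -big_mkcond -/(coef v [:: 1%N]) coef1 // mul0r.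
by rewrite subr0.
Qed.
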